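(* Let $\ell=2m\ge2$, $a\in\mathfrak o_\ell^\times$ with image $\bar a\in\mathfrak o_m$, let $x\in\mathfrak g(\mathfrak o_m)$ be an $\bar a$-regular element, and let $\tilde x\in\mathfrak g(\mathfrak o_\ell)$ be any lift of $x$. Then (1) $\mathbf U(\mathfrak o_\ell)\cap C_{\mathbf G(\mathfrak o_\ell)}(\tilde x)K_\ell^m=\mathbf U(\varpi^m\mathfrak o_\ell)$; (2) the character $\varphi_x$ of $K_\ell^m$ agrees with $\theta_a$ on $\mathbf U(\varpi^m\mathfrak o_\ell)$, so that for any character $\widetilde{\varphi_x}$ of $C_{\mathbf G(\mathfrak o_\ell)}(\tilde x)K_\ell^m$ extending $\varphi_x$, $\mathrm{Hom}_{\mathbf U(\varpi^m\mathfrak o_\ell)}(\widetilde{\varphi_x},\theta_a)\ne0$.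
   Context: $\mathfrak o$: ring of integers of a non-archimedean local field, uniformizer $\varpi$, residue field $\mathbb F_q$ of characteristic $p$; $\mathfrak o_r=\mathfrak o/\varpi^r\mathfrak o$. Either $\mathbf G={\rm GL}_n$, $\mathfrak g=M_n$, or $\mathbf G={\rm SL}_n$, $\mathfrak g=\mathfrak{sl}_n$ with $p$ odd, $p\nmid n$. $\mathbf U(\mathfrak o_\ell)$: upper unitriangular matrices; $\mathbf U(\varpi^k\mathfrak o_\ell)$: those whose strictly upper triangular entries lie in $\varpi^k\mathfrak o_\ell$. $K_\ell^m=\ker(\mathbf G(\mathfrak o_\ell)\to\mathbf G(\mathfrak o_m))$. Fix a primitive character $\varphi$ of $(\mathfrak o_\ell,+)$ (nontrivial on $\varpi^{\ell-1}\mathfrak o_\ell$); $\varphi_x(I+\varpi^my)=\varphi(\varpi^m\mathrm{tr}(\hat xy))$ for $I+\varpi^my\in K_\ell^m$, $\hat x$ any lift of $x$; $\theta_a((u_{ij}))=\varphi(au_{12}+u_{23}+\dots+u_{n-1,n})$. For $\alpha\in\mathfrak o_m^\times$ an $\alpha$-regular element of $\mathfrak g(\mathfrak o_m)$ is a matrix with $(2,1)$ entry $\alpha$, $(i+1,i)$ entries $1$ for $2\le i\le n-1$, arbitrary last column, other entries $0$. $C_{\mathbf G(\mathfrak o_\ell)}(\tilde x)$ is the centralizer of $\tilde x$ in $\mathbf G(\mathfrak o_\ell)$. *)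

(* Defs.v *)
From HB Require Import structures.
From mathcomp Require Import all_boot all_order all_algebra all_fingroup all_field.
Set Implicit Arguments. Unset Strict Implicit. Unset Printing Implicit Defensive.
Import GRing.Theory.
Local Open Scope ring_scope.

(* The ring o_l = o / varpi^l o is modelled as a finite commutative ring R
   together with an element varpi such that R is local with maximal ideal
   varpi R, varpi^l = 0 and varpi^(l-1) <> 0 (a finite chain ring of length l;
   these are exactly the rings o/varpi^l o). *)
Definition chain_ring (R : finComUnitRingType) (varpi : R) (l : nat) : Prop :=
  [/\ forall y : R, y \isn't a GRing.unit -> exists r : R, y = varpi * r,
      varpi ^+ l = 0 & varpi ^+ l.-1 != 0].

Definition inIdeal (R : finComUnitRingType) (varpi : R) (k : nat) (y : R) : bool :=
  [exists r : R, y == varpi ^+ k * r].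

Definition congr_mod (R : finComUnitRingType) (varpi : R) (k : nat) (y z : R) : bool :=
  inIdeal varpi k (y - z).

(* The two cases G = GL_n (g = M_n) and G = SL_n (g = sl_n). *)
Inductive Gkind := GLk | SLk.

Section Defs.
Variables (R : finComUnitRingType) (n : nat).
Local Notation N := n.-1.+1.
Local Notation GT := {'GL_n[R]}.

Definition Gset (k : Gkind) : {set GT} :=
  match k with
  | GLk => [set: GT]
  | SLk => [set g : GT | \det (GLval g) == 1]
  end.

Definition in_lie (k : Gkind) (x : 'M[R]_N) : bool :=
  match k with GLk => true | SLk => \tr x == 0 end.

Definition Cent (k : Gkind) (x : 'M[R]_N) : {set GT} :=
  [set g in Gset k | GLval g *m x == x *m GLval g].

Definition Kset (k : Gkind) (varpi : R) (m : nat) : {set GT} :=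
  [set g in Gset k | [forall i, forall j,
     inIdeal varpi m (GLval g i j - (i == j)%:R)]].

Definition Uset : {set GT} :=
  [set g : GT | [forall i : 'I_N, forall j : 'I_N,
     ((j < i)%N ==> (GLval g i j == 0)) && ((i == j) ==> (GLval g i j == 1))]].

Definition Uk (varpi : R) (k : nat) : {set GT} :=
  [set g in Uset | [forall i : 'I_N, forall j : 'I_N,
     (i < j)%N ==> inIdeal varpi k (GLval g i j)]].

(* x (in M_n(o_l)) reduces mod varpi^m to an (a mod varpi^m)-regular element:
   (2,1) entry = a, (i+1,i) entries = 1 for 2 <= i <= n-1, arbitrary last
   column, all other entries 0 (indices here are 0-based). *)
Definition regular_mod (varpi : R) (m : nat) (a : R) (x : 'M[R]_N) : bool :=
  [forall i : 'I_N, forall j : 'I_N, (j.+1 < N)%N ==>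
     congr_mod varpi m (x i j)
       (if i == j.+1 :> nat then (if j == 0 :> nat then a else 1) else 0)].

(* phi_x(I + varpi^m y) = phi(varpi^m tr(x y)) = phi(tr(x (g - 1))) *)
Definition phi_x (phi : R -> algC) (x : 'M[R]_N) (g : GT) : algC :=
  phi (\tr (x *m (GLval g - 1%:M))).

Definition theta (phi : R -> algC) (a : R) (g : GT) : algC :=
  phi (a * GLval g (inord 0) (inord 1) +
       \sum_(1 <= i < n.-1) GLval g (inord i) (inord i.+1)).

Definition lin_char_on (A : {set GT}) (psi : GT -> algC) : Prop :=
  (forall g h, g \in A -> h \in A -> psi (g * h)%g = psi g * psi h) /\
  (forall g, g \in A -> psi g != 0).

End Defs.

Definition add_char (R : finComUnitRingType) (phi : R -> algC) : Prop :=
  phi 0 = 1 /\ forall y z, phi (y + z) = phi y * phi z.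

Definition primitive_char (R : finComUnitRingType) (varpi : R) (l : nat)
  (phi : R -> algC) : Prop :=
  exists y : R, inIdeal varpi l.-1 y /\ phi y != 1.

(* Main.v *)
Require Import Defs.
From HB Require Import structures.
From mathcomp Require Import all_boot all_order all_algebra all_fingroup all_field zify.
Import GRing.Theory.
Local Open Scope ring_scope.

Section Ideal.
Variables (R : finComUnitRingType) (varpi : R) (m : nat).
Local Notation P := (inIdeal varpi m).

Lemma P0 : P 0.
Proof. by apply/existsP; exists 0; rewrite mulr0. Qed.

Lemma PD y z : P y -> P z -> P (y + z).
Proof.
move=> /existsP[r /eqP->] /existsP[s /eqP->].
by apply/existsP; exists (r + s); rewrite mulrDr.
Qed.

Lemma PN y : P y -> P (- y).
Proof. by move=> /existsP[r /eqP->]; apply/existsP; exists (- r); rewrite mulrN. Qed.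

Lemma PB y z : P y -> P z -> P (y - z).
Proof. by move=> Py Pz; apply: PD => //; apply: PN. Qed.

Lemma PMl r y : P y -> P (r * y).
Proof.
move=> /existsP[s /eqP->]; apply/existsP; exists (r * s).
by rewrite mulrCA.
Qed.

Lemma PMr r y : P y -> P (y * r).
Proof. by rewrite mulrC; apply: PMl. Qed.

Lemma Psum (I : finType) (F : I -> R) : (forall i, P (F i)) -> P (\sum_i F i).
Proof.
move=> H; apply: (big_ind P) => //; [exact: P0 | exact: PD].
Qed.

Lemma Punit s y : s \is a GRing.unit -> P (s * y) -> P y.
Proof. by move=> su H; rewrite -(mulKr su y); apply: PMl. Qed.

Lemma Pmul0 y z : varpi ^+ (2 * m) = 0 -> P y -> P z -> y * z = 0.
Proof.
move=> v0 /existsP[r /eqP->] /existsP[s /eqP->].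
by rewrite mulrACA -exprD addnn -mul2n v0 mul0r.
Qed.

Definition Pm {p q} (M : 'M[R]_(p, q)) := forall i j, P (M i j).

Lemma Pm_mull p q r (A : 'M[R]_(p, q)) (D : 'M[R]_(q, r)) : Pm D -> Pm (A *m D).
Proof. by move=> H i j; rewrite mxE; apply: Psum => k; apply: PMl. Qed.

Lemma Pm_mulr p q r (D : 'M[R]_(p, q)) (A : 'M[R]_(q, r)) : Pm D -> Pm (D *m A).
Proof. by move=> H i j; rewrite mxE; apply: Psum => k; apply: PMr. Qed.

Lemma Pm_sub p q (A B : 'M[R]_(p, q)) : Pm A -> Pm B -> Pm (A - B).
Proof. by move=> HA HB i j; rewrite !mxE; apply: PB. Qed.

End Ideal.
Arguments Pm {R} varpi m {p q} M.
Arguments P0 {R varpi m}.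
Arguments PD {R varpi m y z}.
Arguments PN {R varpi m y}.
Arguments PB {R varpi m y z}.
Arguments PMl {R varpi m} r {y}.
Arguments PMr {R varpi m} r {y}.
Arguments Psum {R varpi m I} F.
Arguments Punit {R varpi m s y}.
Arguments Pmul0 {R varpi m y z}.
Arguments Pm_mull {R varpi m p q r} A {D}.
Arguments Pm_mulr {R varpi m p q r} {D} A.
Arguments Pm_sub {R varpi m p q A B}.

Lemma zid (V : zmodType) (a b c d : V) : c - d = (a - b) - ((a - c) - (b - d)).
Proof. by rewrite (opprB (a - c)) opprB !addrA subrK -addrA addrC addrA subrK. Qed.

Section Sums.
Variables (R : finComUnitRingType) (p' : nat).
Local Notation p := p'.+1.

Lemma sum_succ (i : 'I_p) (G : 'I_p -> R) :
  \sum_(k : 'I_p) (if (i == k.+1 :> nat) then G k else 0) =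
  if (i : nat) is i'.+1 then G (inord i') else 0.
Proof.
case: i => [[|i'] Hi] /=.
  by apply: big1 => k _.
rewrite -big_mkcond /=; apply: big_pred1 => k /=.
apply/idP/idP.
  move=> /eqP[->]; apply/eqP/val_inj; rewrite /= inordK //; exact: ltnW.
move=> /eqP->; rewrite inordK //; exact: ltnW.
Qed.

Lemma sum_at (j : nat) (G : 'I_p -> R) : (j < p)%N ->
  \sum_(k : 'I_p) (if (k == j :> nat) then G k else 0) = G (inord j).
Proof.
move=> Hj; rewrite -big_mkcond /=; apply: big_pred1 => k /=.
apply/idP/idP.
  by move=> /eqP<-; apply/eqP/val_inj; rewrite /= inordK.
by move=> /eqP->; rewrite inordK.
Qed.

End Sums.
Section Cent.
Variables (R : finComUnitRingType) (varpi : R) (m p' : nat) (a : R).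
Local Notation p := p'.+1.
Local Notation P := (inIdeal varpi m).

Definition sc (j : nat) : R := if j == 0%N then a else 1.
Definition ee (i j : nat) : R := if i == j.+1 then sc j else 0.

Lemma sc_unit j : a \is a GRing.unit -> sc j \is a GRing.unit.
Proof. by move=> au; rewrite /sc; case: ifP => // _; apply: unitr1. Qed.

Lemma cent_lemma (u x : 'M[R]_p) :
  a \is a GRing.unit ->
  (forall i j : 'I_p, (j < i)%N -> u i j = 0) ->
  Pm varpi m (u *m x - x *m u) ->
  (forall i j : 'I_p, (j.+1 < p)%N -> P (x i j - ee i j)) ->
  forall i j : 'I_p, (i < j)%N -> P (u i j).
Proof.
move=> au ulow Hc Hx.
pose E : 'M[R]_p := \matrix_(i, j) if (j.+1 < p)%N then ee i j else x i j.
have HD : Pm varpi m (x - E).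
  move=> i j; rewrite !mxE; case: ifP => Hj; first by apply: Hx.
  by rewrite subrr; apply: P0.
have H2 : Pm varpi m (u *m E - E *m u).
  have -> : u *m E - E *m u =
     (u *m x - x *m u) - (u *m (x - E) - (x - E) *m u).
    by rewrite mulmxBr mulmxBl (zid _ (u *m x) (x *m u)) .
  apply: Pm_sub => //; apply: Pm_sub; [exact: Pm_mull | exact: Pm_mulr].
have H3 : forall (i j : 'I_p), (j.+1 < p)%N -> (u *m E) i j = u i (inord j.+1) * sc j.
  move=> i j Hj; rewrite mxE.
  rewrite -(@sum_at _ _ _ (fun k => u i k * sc j) Hj); apply: eq_bigr => k _.
  rewrite mxE Hj /ee; case: ifP => _; [done | by rewrite mulr0].
have H4 : forall (i j : 'I_p), (j.+1 < p)%N ->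
    (E *m u) i j = if (i : nat) is i'.+1 then sc i' * u (inord i') j else 0.
  move=> i j Hj; rewrite mxE.
  transitivity (\sum_(k : 'I_p) if (i == k.+1 :> nat) then sc k * u k j else 0);
    last first.
    rewrite (@sum_succ _ _ i (fun k => sc k * u k j)).
    by case: (nat_of_ord i) (ltn_ord i) => [|i'] Hi //; rewrite inordK // ltnW.
  apply: eq_bigr => k _.
  rewrite mxE; case: ifP => Hk.
    by rewrite /ee; case: ifP => _ //; rewrite mul0r.
  have Hk' : (k : nat) = p' by apply/eqP; rewrite eqn_leq -ltnS ltn_ord /= leqNgt -ltnS Hk.
  rewrite ulow; last by rewrite Hk'; rewrite ltnS in Hj.
  rewrite mulr0; case: ifP => // /eqP Hi; have := ltn_ord i; by rewrite Hi Hk' ltnn.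
have H5 : forall i j : 'I_p, (j.+1 < p)%N ->
    P (u i (inord j.+1) * sc j - (if (i : nat) is i'.+1 then sc i' * u (inord i') j else 0)).
  move=> i j Hj; rewrite -H3 // -H4 //.
  have -> : (u *m E) i j - (E *m u) i j = (u *m E - E *m u) i j by rewrite !mxE.
  exact: H2.
have key : forall i, forall (i' j : 'I_p), (i' : nat) = i -> (i < j)%N -> P (u i' j).
  elim=> [|i IH] i' j Hi Hij.
    case: j Hij => [[|j0] Hj] //= _.
    have Hj0 : (j0 < p)%N by apply: ltnW.
    have := H5 i' (inord j0); rewrite inordK // Hi subr0 => /(_ Hj).
    have -> : inord j0.+1 = Ordinal Hj by apply/val_inj; rewrite /= inordK.
    by rewrite mulrC; apply: Punit; apply: sc_unit.
  case: j Hij => [[|j0] Hj] //= Hij.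
  have Hj0 : (j0 < p)%N by apply: ltnW.
  have := H5 i' (inord j0); rewrite inordK // Hi => /(_ Hj).
  have -> : inord j0.+1 = Ordinal Hj by apply/val_inj; rewrite /= inordK.
  have Hi0 : (i < p)%N by rewrite -Hi ltnW.
  have HP : P (u (inord i) (inord j0)) by apply: IH; rewrite ?inordK.
  move=> H; have {}H := PD H (PMl (sc i) HP); rewrite subrK in H.
  by rewrite mulrC in H; apply: Punit H; apply: sc_unit.
by move=> i j; apply: key.
Qed.
End Cent.
Arguments sc {R}.
Arguments ee {R}.
Section Main.
Variables (R : finComUnitRingType) (varpi : R) (m n : nat).
Local Notation P := (inIdeal varpi m).
Local Notation GT := {'GL_n[R]}.

Lemma Uk_facts (u : GT) : u \in Uk n varpi m ->
  [/\ forall i j : 'I_n.-1.+1, (j < i)%N -> GLval u i j = 0,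
      forall i : 'I_n.-1.+1, GLval u i i = 1 &
      forall i j : 'I_n.-1.+1, (i < j)%N -> P (GLval u i j)].
Proof.
rewrite !inE => /andP[/forallP HU /forallP HK]; split.
- move=> i j ji; have /forallP/(_ j)/andP[/implyP H _] := HU i.
  by apply/eqP; apply: H.
- move=> i; have /forallP/(_ i)/andP[_ /implyP H] := HU i.
  by apply/eqP; apply: H.
- by move=> i j ij; have /forallP/(_ j)/implyP := HK i; apply.
Qed.

Lemma Uk_K (k : Gkind) (u : GT) : u \in Uk n varpi m -> u \in Kset n k varpi m.
Proof.
move=> /Uk_facts[ul ud uu]; rewrite inE; apply/andP; split.
  case: k => //; rewrite inE -det_tr det_trig.
    by rewrite big1 // => i _; rewrite mxE ud.
  by apply/is_trig_mxP => i j ij; rewrite mxE ul.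
apply/forallP => i; apply/forallP => j.
case: (ltngtP i j) => [ij|ji|/val_inj->].
- have -> : (i == j) = false by apply/negbTE; rewrite neq_ltn ij.
  by rewrite subr0; apply: uu.
- have -> : (i == j) = false by apply/negbTE; rewrite neq_ltn ji orbT.
  by rewrite ul // subrr; apply: P0.
- by rewrite eqxx ud subrr; apply: P0.
Qed.

Lemma one_Cent (k : Gkind) (x : 'M[R]_n.-1.+1) : (1%g : GT) \in Cent k x.
Proof.
rewrite inE GL_1E /= mul1mx mulmx1 eqxx andbT.
by case: k => //; rewrite inE GL_1E det1.
Qed.


Lemma trace_lemma (p' : nat) a (u x : 'M[R]_p'.+1) :
  varpi ^+ (2 * m)%N = 0 -> (0 < p')%N ->
  (forall i j : 'I_p'.+1, (j < i)%N -> u i j = 0) ->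
  (forall i, u i i = 1) ->
  (forall i j : 'I_p'.+1, (i < j)%N -> P (u i j)) ->
  (forall i j : 'I_p'.+1, (j.+1 < p'.+1)%N -> P (x i j - ee a i j)) ->
  \tr (x *m (u - 1%:M)) =
    a * u (inord 0) (inord 1) + \sum_(1 <= i < p') u (inord i) (inord i.+1).
Proof.
move=> v0 p0 ul ud uu Hx.
pose f (j : nat) := if j is j'.+1 then sc a j' * u (inord j') (inord j) else 0.
have step : forall i : 'I_p'.+1, (x *m (u - 1%:M)) i i = f i.
  move=> i; rewrite mxE.
  transitivity (\sum_(k : 'I_p'.+1) if (i == k.+1 :> nat) then sc a k * u k i else 0).
    apply: eq_bigr => k _; rewrite !mxE.
    case: (ltngtP k i) => [ki|ik|/val_inj ->].
    + have k1 : (k.+1 < p'.+1)%N by apply: leq_ltn_trans ki (ltn_ord i).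
      have -> : (k == i) = false by apply/negbTE; rewrite neq_ltn ki.
      rewrite subr0 -(subrK (ee a i k) (x i k)) mulrDl (Pmul0 v0 (Hx i k k1) (uu k i ki)) add0r /ee.
      by case: ifP => _; rewrite ?mul0r.
    + have -> : (k == i) = false by apply/negbTE; rewrite neq_ltn ik orbT.
      rewrite ul // subrr mulr0; case: eqP => // Hik; lia.
    + by rewrite eqxx ud subrr mulr0; case: eqP => //; lia.
  rewrite (@sum_succ _ _ i (fun k => sc a k * u k i)) /f inord_val.
  by case: (nat_of_ord i) (ltn_ord i) => [|i'] Hi //; rewrite inordK // ltnW.
rewrite /mxtrace (eq_bigr _ (fun i _ => step i)) -(big_mkord xpredT f) big_nat_recl //.
clear step; destruct p' as [|p'']; first by [].
rewrite big_nat_recl // /f /= add0r big_add1 /=; congr (_ + _).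
apply: eq_bigr => i _; by rewrite /sc /= mul1r.
Qed.

End Main.

Theorem lemma4p3 (R : finComUnitRingType) (varpi : R) (m n : nat) (k : Gkind)
  (phi : R -> algC) (a : R) (x : 'M[R]_n.-1.+1) :
  (0 < m)%N -> (2 <= n)%N ->
  chain_ring varpi (2 * m) ->
  (k = SLk -> (2%:R : R) \is a GRing.unit /\ (n%:R : R) \is a GRing.unit) ->
  add_char phi -> primitive_char varpi (2 * m) phi ->
  a \is a GRing.unit ->
  in_lie k x -> regular_mod varpi m a x ->
  [/\ (Uset R n :&: (Cent k x * Kset n k varpi m)%g = Uk n varpi m),
      (forall u, u \in Uk n varpi m -> phi_x phi x u = theta phi a u) &
      (forall psi : {'GL_n[R]} -> algC,
         lin_char_on (Cent k x * Kset n k varpi m)%g psi ->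
         (forall g, g \in Kset n k varpi m -> psi g = phi_x phi x g) ->
         exists2 c : algC, c != 0 &
           forall u, u \in Uk n varpi m -> c * psi u = theta phi a u * c)].
Proof.
move=> m0 n2 [_ v0 _] _ _ _ au _ xreg.
have Hx : forall i j : 'I_n.-1.+1, (j.+1 < n.-1.+1)%N ->
    inIdeal varpi m (x i j - ee a i j).
  by move=> i j Hj; move/forallP: xreg => /(_ i) /forallP /(_ j) /implyP /(_ Hj).
have part2 : forall u, u \in Uk n varpi m -> phi_x phi x u = theta phi a u.
  move=> u /Uk_facts[ul ud uu]; rewrite /phi_x /theta (@trace_lemma R varpi m n.-1 a (GLval u) x v0 _ ul ud uu Hx) //.
  by case: n n2 {x xreg Hx u ul ud uu} => [|[|n']].
split => //.
- apply/setP => g; rewrite inE; apply/idP/idP => [/andP[gU] | gUk].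
    case/mulsgP => c k' cC kK eg; subst g.
    rewrite inE gU /=.
    apply/forallP => i; apply/forallP => j; apply/implyP => ij.
    have ul : forall i0 j0 : 'I_n.-1.+1, (j0 < i0)%N -> GLval (c * k')%g i0 j0 = 0.
      move=> i0 j0 h; move: gU; rewrite inE => /forallP/(_ i0)/forallP/(_ j0)/andP[/implyP H _].
      by apply/eqP/H.
    apply: (@cent_lemma R varpi m n.-1 a (GLval (c * k')%g) x au ul _ Hx i j ij).
    have cx : GLval c *m x = x *m GLval c by move: cC; rewrite inE => /andP[_ /eqP].
    have HD : Pm varpi m (GLval k' - 1%:M).
      move: kK; rewrite inE => /andP[_ /forallP H] i0 j0.
      by have := H i0 => /forallP/(_ j0); rewrite !mxE.
    rewrite GL_MxE.
    have -> : GLval c *m GLval k' *m x - x *m (GLval c *m GLval k') =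
        GLval c *m ((GLval k' - 1%:M) *m x - x *m (GLval k' - 1%:M)).
      rewrite !mulmxBl !mulmxBr mul1mx mulmx1 !mulmxA -cx.
      by rewrite opprB addrA subrK.
    exact: Pm_mull _ (Pm_sub (Pm_mulr x HD) (Pm_mull x HD)).
  apply/andP; split; first by move: gUk; rewrite inE => /andP[].
  rewrite -(mul1g g); apply: mem_mulg; [exact: one_Cent | exact: Uk_K].
- move=> psi _ Hpsi; exists 1; first exact: oner_neq0.
  by move=> u uU; rewrite mul1r mulr1 Hpsi ?part2 //; apply: Uk_K.
Qed.
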